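(* Let $L_0>0$, $D_1,D_2>0$, $c\in\mathbb{R}$, and consider on $0<\xi<L_0$ the system $\partial_t u_1=D_1\partial_\xi^2u_1+c\,\partial_\xi u_1+f_1(u_1,u_2)$, $\partial_t u_2=D_2\partial_\xi^2u_2+c\,\partial_\xi u_2+f_2(u_1,u_2)$ with $u_1=u_2=0$ at $\xi=0,L_0$, where $f_1,f_2$ satisfy the assumptions in the context, and suppose that for some $n>0$ and positive constants $\hat h_1,\hat g_2,\hat h_2$, $h_1(u)=(\hat h_1u)^n$, $g_2(u)=(\hat g_2u)^n$, $h_2(u)=(\hat h_2u)^n$. Assume $r_1>\frac{D_1\pi^2}{L_0^2}+\frac{c^2}{4D_1}$ and $r_2>\frac{D_2\pi^2}{L_0^2}+\frac{c^2}{4D_2}$, let $U_1$ be the positive stationary state satisfying $D_1U_1''+cU_1'+F_1(U_1)=0$, $U_1(0)=U_1(L_0)=0$, and $U_2$ the positive stationary state satisfying $D_2U_2''+cU_2'+F_2(U_2)=0$, $U_2(0)=U_2(L_0)=0$. 1. Suppose $c=0$. If $\frac{r_2}{r_1}\ge\frac{D_2}{D_1}$ and $\left(\frac{r_2}{r_1}\right)^{1/n}\hat h_1\ge\hat g_2$, with at least one inequality strict, then $u_2$ can invade $(U_1,0)$. If $\frac{r_2}{r_1}\le\frac{D_2}{D_1}$ and $\left(\frac{r_2}{r_1}\right)^{1/n}\hat h_1\le\hat g_2$, with at least one inequality strict, then $u_2$ cannot invade $(U_1,0)$. 2. Suppose $D_1=D_2$ ($c$ zero or nonzero). If $r_2\ge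 r_1$ and $\left(\frac{r_2}{r_1}\right)^{1/n}\hat h_1\ge\hat g_2$, with at least one strict, then $u_2$ can invade $(U_1,0)$. If $r_2\le r_1$ and $\left(\frac{r_2}{r_1}\right)^{1/n}\hat h_1\le\hat g_2$, with at least one strict, then $u_2$ cannot invade $(U_1,0)$. 3. Suppose $c\ne0$ and $D_1\ne D_2$. If $r_2-\frac{c^2}{4D_2}\ge\frac{D_2}{D_1}\left(r_1-\frac{c^2}{4D_1}\right)$ and $\frac{\hat g_2}{\hat h_1}\le\left(\frac{D_2}{D_1}\right)^{1/n}e^{-\frac{L_0}{2}\left|c\left(\frac1{D_2}-\frac1{D_1}\right)\right|}$, then $u_2$ can invade $(U_1,0)$. If $r_2-\frac{c^2}{4D_2}\le\frac{D_2}{D_1}\left(r_1-\frac{c^2}{4D_1}\right)$ and $\frac{\hat g_2}{\hat h_1}\ge\left(\frac{D_2}{D_1}\right)^{1/n}e^{\frac{L_0}{2}\left|c\left(\frac1{D_2}-\frac1{D_1}\right)\right|}$, then $u_2$ cannot invade $(U_1,0)$.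
   Context: This system arises from two species diffusing on an interval $ct<x<ct+L_0$ moving at constant speed $c$, written in the moving coordinate $\xi=x-ct$. Assumptions: $f_1$ continuous; $F_1(u):=f_1(u,0)$; $f_1(u_1,u_2)=F_1(u_1)+o(1)$ as $u_2\to0$; $F_1$ Lipschitz, differentiable at $0$, $F_1(0)=F_1(K_1)=0$ for some $K_1>0$, $F_1'(0)=r_1>0$, $F_1(u)/u$ non-increasing on $u>0$, and $F_1(u)=u(r_1-h_1(u))$ with $h_1$ continuous, non-decreasing on $u\ge0$, $h_1(0)=0$. Also $f_2(u_1,u_2)=u_2(r_2-g_2(u_1))+o(u_2)$ as $u_2\to0$ with $r_2>0$, $g_2$ continuous, $g_2(0)=0$, $g_2\ge0$ on $[0,\infty)$. With $F_2(u):=f_2(0,u)$: $F_2$ Lipschitz, differentiable at $0$, $F_2(0)=F_2(K_2)=0$ for some $K_2>0$, $F_2'(0)=r_2$, $F_2(u)/u$ non-increasing on $u>0$, $F_2(u)=u(r_2-h_2(u))$ with $h_2$ continuous, non-decreasing, $h_2(0)=0$. Under these assumptions the principal Dirichlet eigenvalue of $-D_n\partial_\xi^2-c\partial_\xi$ on $(0,L_0)$ is $\mu_n=\frac{D_n\pi^2}{L_0^2}+\frac{c^2}{4D_n}$, and for $r_n>\mu_n$ the positive stationary state $0<U_n\le K_n$ in $(0,L_0)$ exists and is unique. Invasion: let $\hat\mu$ be the principal eigenvalue (with positive eigenfunction $\phi$, $\phi(0)=\phi(L_0)=0$) of $-D_2\phi''-c\phi'+g_2(U_1(\xi))\phi=\hat\mu\phi$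 on $(0,L_0)$, i.e. the linearisation of the $u_2$-equation at $(U_1,0)$. ''$u_2$ can invade $(U_1,0)$'' means $r_2>\hat\mu$ (linearised $u_2$ grows); ''$u_2$ cannot invade'' means $r_2<\hat\mu$ (linearised $u_2$ decays). *)

(* Defs.v *)
From Stdlib Require Import Reals.
From Coquelicot Require Import Coquelicot.
Open Scope R_scope.

Definition cont_on_closed (U : R -> R) (a b : R) : Prop :=
  forall x, a <= x <= b ->
    filterlim U (within (fun y => a <= y <= b) (locally x)) (locally (U x)).

Definition cont_on_nonneg (h : R -> R) : Prop :=
  forall x, 0 <= x ->
    filterlim h (within (fun y => 0 <= y) (locally x)) (locally (h x)).

Definition nondecr_on_nonneg (h : R -> R) : Prop :=
  forall x y, 0 <= x -> x <= y -> h x <= h y.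

Definition loc_lipschitz (F : R -> R) : Prop :=
  forall M, 0 <= M -> exists Lc, forall x y, Rabs x <= M -> Rabs y <= M ->
    Rabs (F x - F y) <= Lc * Rabs (x - y).

Definition kpp_term (F : R -> R) (r K : R) (h : R -> R) : Prop :=
  loc_lipschitz F /\ is_derive F 0 r /\ 0 < K /\ F 0 = 0 /\ F K = 0 /\ 0 < r /\
  (forall u v, 0 < u -> u <= v -> F v / v <= F u / u) /\
  (forall u, 0 <= u -> F u = u * (r - h u)) /\
  cont_on_nonneg h /\ nondecr_on_nonneg h /\ h 0 = 0.

Definition stationary_state (D c L : R) (F : R -> R) (K : R) (U : R -> R) : Prop :=
  U 0 = 0 /\ U L = 0 /\ cont_on_closed U 0 L /\
  (forall x, 0 < x < L -> 0 < U x <= K) /\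
  exists U' U'' : R -> R, forall x, 0 < x < L ->
    is_derive U x (U' x) /\ is_derive U' x (U'' x) /\
    D * U'' x + c * U' x + F (U x) = 0.

(** mu is the principal Dirichlet eigenvalue of -D phi'' - c phi' + q phi
    on (0,L): eigenvalue with a positive (classical) eigenfunction *)
Definition principal_dirichlet_eig (D c L : R) (q : R -> R) (mu : R) : Prop :=
  exists phi phi' phi'' : R -> R,
    phi 0 = 0 /\ phi L = 0 /\ cont_on_closed phi 0 L /\
    (forall x, 0 < x < L -> 0 < phi x) /\
    forall x, 0 < x < L ->
      is_derive phi x (phi' x) /\ is_derive phi' x (phi'' x) /\
      - D * phi'' x - c * phi' x + q x * phi x = mu * phi x.

Definition can_invade (D2 c L r2 : R) (g2 U1 : R -> R) : Prop :=
  forall mu, principal_dirichlet_eig D2 c L (fun x => g2 (U1 x)) mu -> mu < r2.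

Definition cannot_invade (D2 c L r2 : R) (g2 U1 : R -> R) : Prop :=
  forall mu, principal_dirichlet_eig D2 c L (fun x => g2 (U1 x)) mu -> r2 < mu.

(* Main.v *)
Require Import Defs.
From Stdlib Require Import Reals Lra.
From Coquelicot Require Import Coquelicot.
Open Scope R_scope.

Lemma coc_eps (f : R -> R) a b : cont_on_closed f a b ->
  forall x, a <= x <= b -> forall eps, 0 < eps -> exists del, 0 < del /\
   forall y, a <= y <= b -> Rabs (y - x) < del -> Rabs (f y - f x) < eps.
Proof.
intros H x Hx eps He.
destruct (proj1 (filterlim_locally _ _) (H x Hx) (mkposreal eps He)) as [d Hd].
exists d; split; [apply cond_pos|].
intros y Hy Hyx. apply (Hd y); [exact Hyx | exact Hy].
Qed.

Lemma coc_bound (f : R -> R) L : 0 <= L -> cont_on_closed f 0 L ->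
  exists B, forall x, 0 <= x <= L -> Rabs (f x) <= B.
Proof.
intros HL H.
set (g := fun x => f (Rmax 0 (Rmin L x))).
assert (Hg : forall x, 0 <= x <= L -> g x = f x).
{ intros x Hx; unfold g; f_equal; rewrite Rmin_right by lra; rewrite Rmax_right; lra. }
assert (Hc : forall x, 0 <= x <= L -> continuity_pt g x).
{ intros x Hx eps He.
  destruct (coc_eps f 0 L H x Hx eps He) as [d [Hd Hd']].
  exists d; split; [exact Hd|].
  intros y [_ Hy]. unfold R_dist in *. simpl in *. unfold R_dist in *.
  rewrite (Hg x Hx). apply Hd'.
  - split; [apply Rmax_l|]. apply Rmax_lub; [lra| apply Rmin_l].
  - apply Rabs_def2 in Hy. apply Rabs_def1;
    unfold Rmax, Rmin; repeat destruct Rle_dec; lra. }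
destruct (continuity_ab_maj g 0 L HL Hc) as [M [HM HM']].
destruct (continuity_ab_min g 0 L HL Hc) as [m [Hm Hm']].
exists (Rmax (Rabs (g M)) (Rabs (g m))).
intros x Hx. rewrite <- Hg by exact Hx. specialize (HM x Hx). specialize (Hm x Hx).
unfold Rabs, Rmax; repeat destruct Rcase_abs; repeat destruct Rle_dec; lra.
Qed.

Definition good (L : R) (v v' v'' P : R -> R) : Prop :=
 (exists B, forall x, 0 < x < L -> Rabs (v x) <= B) /\
 (forall eps, 0 < eps -> exists del, 0 < del /\
    forall x, 0 < x < L -> (x < del \/ L - del < x) -> Rabs (v x) < eps) /\
 (forall x, 0 < x < L -> 0 < v x) /\
 (forall x, 0 < x < L -> is_derive v x (v' x) /\ is_derive v' x (v'' x) /\ v'' x = P x * v x) /\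
 (exists BP, forall x, 0 < x < L -> Rabs (P x) <= BP).

Lemma der_cont f x l : is_derive f x l -> continuity_pt f x.
Proof.
intros H. apply continuity_pt_filterlim. apply (ex_derive_continuous (K:=R_AbsRing) (V:=R_NormedModule)). exists l; exact H.
Qed.

Lemma deriv_bound L v v' v'' P : 0 < L -> good L v v' v'' P ->
  exists M, forall x, 0 < x < L -> Rabs (v' x) <= M.
Proof.
intros HL [[B HB] [_ [_ [Hd [BP HBP]]]]].
exists (Rabs (v' (L/2)) + BP * B * L).
intros x Hx.
destruct (MVT_gen v' (L/2) x v'') as [c [Hc Hc']].
- intros t Ht. apply Hd. revert Ht. unfold Rmin, Rmax; destruct Rle_dec; lra.
- intros t Ht. apply der_cont with (v'' t). apply Hd. revert Ht. unfold Rmin, Rmax; destruct Rle_dec; lra.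
- assert (Hcin : 0 < c < L) by (revert Hc; unfold Rmin, Rmax; destruct Rle_dec; lra).
  destruct (Hd c Hcin) as [_ [_ Hvc]].
  assert (H1 := HB c Hcin). assert (H2 := HBP c Hcin).
  assert (Hab : Rabs (v'' c) <= BP * B).
  { rewrite Hvc, Rabs_mult. apply Rmult_le_compat; auto using Rabs_pos. }
  assert (Hxl : Rabs (x - L/2) <= L) by (apply Rabs_le; lra).
  assert (Habs : Rabs (v' x - v' (L/2)) <= BP * B * L).
  { rewrite Hc', Rabs_mult. apply Rmult_le_compat; auto using Rabs_pos. }
  assert (H3 := Rabs_triang_inv (v' x) (v' (L/2))). lra.
Qed.

Lemma is_derive_val (f : R -> R) x l l' : is_derive f x l -> l = l' -> is_derive f x l'.
Proof. intros H ->; exact H. Qed.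

Lemma core L v v' v'' P V V' V'' Q : 0 < L -> good L v v' v'' P -> good L V V' V'' Q ->
  (forall x, 0 < x < L -> P x <= Q x) -> (exists x0, 0 < x0 < L /\ P x0 < Q x0) -> False.
Proof.
intros HL Gv GV HPQ [x0 [Hx0 Hx0']].
destruct (deriv_bound L v v' v'' P HL Gv) as [Mv HMv].
destruct (deriv_bound L V V' V'' Q HL GV) as [MV HMV].
destruct Gv as [[Bv HBv] [Sv [Pv [Dv _]]]].
destruct GV as [[BV HBV] [SV [PV [DV _]]]].
set (W := fun x => v' x * V x - v x * V' x).
assert (dW : forall x, 0 < x < L -> is_derive W x (v x * V x * (P x - Q x))).
{ intros x Hx. destruct (Dv x Hx) as [d1 [d2 e1]]. destruct (DV x Hx) as [d3 [d4 e2]].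
  assert (H1 : is_derive (fun x => v' x * V x) x (v'' x * V x + v' x * V' x)).
  { apply (is_derive_mult (K:=R_AbsRing) v' V x (v'' x) (V' x) d2 d3). intros; apply Rmult_comm. }
  assert (H2 : is_derive (fun x => v x * V' x) x (v' x * V' x + v x * V'' x)).
  { apply (is_derive_mult (K:=R_AbsRing) v V' x (v' x) (V'' x) d1 d4). intros; apply Rmult_comm. }
  assert (H3 := is_derive_minus _ _ _ _ _ H1 H2).
  eapply is_derive_val; [exact H3|].
  unfold minus, plus, opp; simpl. rewrite e1, e2. ring. }
assert (mono : forall a b, 0 < a -> a <= b -> b < L -> W b <= W a).
{ intros a b Ha Hab Hb. destruct (Req_dec a b) as [->|Hne]; [lra|].
  destruct (MVT_gen W a b (fun x => v x * V x * (P x - Q x))) as [c [Hc Hc']].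
  - intros t Ht. apply dW. revert Ht. unfold Rmin, Rmax; destruct Rle_dec; lra.
  - intros t Ht. apply der_cont with (v t * V t * (P t - Q t)). apply dW.
    revert Ht. unfold Rmin, Rmax; destruct Rle_dec; lra.
  - assert (Hcin : 0 < c < L) by (revert Hc; unfold Rmin, Rmax; destruct Rle_dec; lra).
    assert (h1 := Pv c Hcin). assert (h2 := PV c Hcin). assert (h3 := HPQ c Hcin).
    assert (0 <= v c * V c) by nra.
    assert (v c * V c * (P c - Q c) <= 0) by nra. nra. }
assert (strict : exists a b, 0 < a < b /\ b < L /\ W b < W a).
{ set (l0 := v x0 * V x0 * (P x0 - Q x0)).
  assert (Hl0 : l0 < 0).
  { unfold l0. assert (h1 := Pv x0 Hx0). assert (h2 := PV x0 Hx0).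
    assert (0 < v x0 * V x0) by nra. nra. }
  assert (HD := proj1 (is_derive_Reals _ _ _) (dW x0 Hx0)).
  destruct (HD (- l0) ltac:(lra)) as [del Hdel].
  set (h := Rmin (del/2) ((L - x0)/2)).
  assert (Hh : 0 < h /\ h < del /\ h <= (L - x0)/2).
  { unfold h, Rmin; destruct Rle_dec; assert (del > 0) by apply cond_pos; lra. }
  assert (Hq := Hdel h ltac:(lra) ltac:(rewrite Rabs_right; lra)).
  apply Rabs_def2 in Hq. destruct Hq as [Hq _]. change (v x0 * V x0 * (P x0 - Q x0)) with l0 in Hq.
  exists x0, (x0 + h). split; [lra|]. split; [lra|].
  assert (Hlt : (W (x0 + h) - W x0) / h < 0) by lra.
  assert (Heq : W (x0 + h) - W x0 = (W (x0 + h) - W x0) / h * h) by (field; lra).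
  assert (Hh0 : 0 < h) by lra. clear -Hlt Heq Hh0. revert Hlt Heq. generalize ((W (x0 + h) - W x0) / h). intros a Hlt Heq.
  assert (a * h < 0). { rewrite <- (Rmult_0_l h). apply Rmult_lt_compat_r; assumption. } lra. }
destruct strict as [a [b [Hab [Hb HW]]]].
set (eps := (W a - W b) / 2).
assert (Heps : 0 < eps) by (unfold eps; lra).
assert (HMv0 : 0 <= Mv) by (specialize (HMv (L/2) ltac:(lra)); assert (H:=Rabs_pos (v' (L/2))); lra).
assert (HMV0 : 0 <= MV) by (specialize (HMV (L/2) ltac:(lra)); assert (H:=Rabs_pos (V' (L/2))); lra).
set (e' := eps / (Mv + MV + 1)).
assert (He' : 0 < e') by (unfold e'; apply Rdiv_lt_0_compat; lra).
destruct (Sv e' He') as [d1 [Hd1 Hd1']].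
destruct (SV e' He') as [d2 [Hd2 Hd2']].
assert (small : forall x, 0 < x < L -> (x < Rmin d1 d2 \/ L - Rmin d1 d2 < x) -> Rabs (W x) < eps).
{ intros x Hx Hnear.
  assert (A1 : Rabs (v x) < e').
  { apply Hd1' with (1 := Hx). revert Hnear; unfold Rmin; destruct Rle_dec; lra. }
  assert (A2 : Rabs (V x) < e').
  { apply Hd2' with (1 := Hx). revert Hnear; unfold Rmin; destruct Rle_dec; lra. }
  assert (B1 := HMv x Hx). assert (B2 := HMV x Hx).
  unfold W. 
  assert (T : Rabs (v' x * V x - v x * V' x) <= Mv * e' + e' * MV).
  { eapply Rle_trans; [apply Rabs_triang|]. rewrite Rabs_Ropp, !Rabs_mult.
    apply Rplus_le_compat; apply Rmult_le_compat; auto using Rabs_pos; lra. }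
  assert (T2 : Mv * e' + e' * MV < eps).
  { unfold e'. apply Rmult_lt_reg_r with (Mv + MV + 1); [lra|].
    field_simplify; [nra|lra]. }
  lra. }
set (d := Rmin d1 d2).
assert (Hd : 0 < d) by (unfold d, Rmin; destruct Rle_dec; lra).
set (y := Rmin (d/2) (a/2)).
assert (Hy : 0 < y /\ y < d /\ y <= a/2) by (unfold y, Rmin; destruct Rle_dec; lra).
set (z := Rmax (L - d/2) ((b + L)/2)).
assert (Hz : L - d < z /\ z < L /\ (b + L)/2 <= z) by (unfold z, Rmax; destruct Rle_dec; lra).
assert (Wy : Rabs (W y) < eps).
{ apply small; [lra|]. left; fold d; lra. }
assert (Wz : Rabs (W z) < eps).
{ apply small; [lra|]. right; fold d; lra. }
assert (My := mono y a ltac:(lra) ltac:(lra) ltac:(lra)).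
assert (Mz := mono b z ltac:(lra) ltac:(lra) ltac:(lra)).
apply Rabs_def2 in Wy. apply Rabs_def2 in Wz. unfold eps in *. lra.
Qed.

Lemma exp_le' x y : x <= y -> exp x <= exp y.
Proof. intros [H | ->]; [left; apply exp_increasing; exact H | right; reflexivity]. Qed.

Lemma transform L D c (phi phi' phi'' Rf : R -> R) : 0 < L -> 0 < D ->
  phi 0 = 0 -> phi L = 0 -> cont_on_closed phi 0 L ->
  (forall x, 0 < x < L -> 0 < phi x) ->
  (forall x, 0 < x < L -> is_derive phi x (phi' x) /\ is_derive phi' x (phi'' x) /\
       D * phi'' x + c * phi' x = Rf x * phi x) ->
  (exists BR, forall x, 0 < x < L -> Rabs (Rf x) <= BR) ->
  let a := c / (2 * D) in
  good L (fun x => exp (a * x) * phi x) (fun x => exp (a * x) * (a * phi x + phi' x))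
    (fun x => exp (a * x) * (a * a * phi x + 2 * a * phi' x + phi'' x))
    (fun x => a * a + Rf x / D).
Proof.
intros HL HD H0 HL0 Hc Hpos Hder [BR HBR] a.
set (E := exp (Rabs a * L)).
assert (HE : forall x, 0 < x < L -> 0 < exp (a * x) <= E).
{ intros x Hx. split; [apply exp_pos|]. apply exp_le'.
  assert (H1 := Rle_abs a). assert (H2 := Rabs_pos a). nra. }
assert (HE0 : 0 < E) by apply exp_pos.
destruct (coc_bound phi L ltac:(lra) Hc) as [B HB].
split; [|split; [|split; [|split]]].
- exists (E * B). intros x Hx. rewrite Rabs_mult, (Rabs_right (exp _)) by (left; apply exp_pos).
  destruct (HE x Hx). apply Rmult_le_compat; auto using Rabs_pos; try lra. apply HB; lra.
- intros eps Heps.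
  destruct (coc_eps phi 0 L Hc 0 ltac:(lra) (eps / E) ltac:(apply Rdiv_lt_0_compat; lra)) as [d1 [Hd1 Hd1']].
  destruct (coc_eps phi 0 L Hc L ltac:(lra) (eps / E) ltac:(apply Rdiv_lt_0_compat; lra)) as [d2 [Hd2 Hd2']].
  exists (Rmin d1 d2). split; [unfold Rmin; destruct Rle_dec; lra|].
  intros x Hx Hn.
  assert (Hp : Rabs (phi x) < eps / E).
  { destruct Hn as [Hn|Hn].
    - rewrite <- (Rminus_0_r (phi x)), <- H0. apply Hd1'; [lra|].
      rewrite Rminus_0_r, Rabs_right by lra. revert Hn; unfold Rmin; destruct Rle_dec; lra.
    - rewrite <- (Rminus_0_r (phi x)), <- HL0. apply Hd2'; [lra|].
      rewrite Rabs_left1 by lra. revert Hn; unfold Rmin; destruct Rle_dec; lra. }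
  rewrite Rabs_mult, (Rabs_right (exp _)) by (left; apply exp_pos).
  destruct (HE x Hx).
  apply Rle_lt_trans with (E * Rabs (phi x)).
  + apply Rmult_le_compat_r; auto using Rabs_pos.
  + apply Rmult_lt_reg_r with (/ E). apply Rinv_0_lt_compat; lra.
    replace (E * Rabs (phi x) * / E) with (Rabs (phi x)) by (field; lra). exact Hp.
- intros x Hx. apply Rmult_lt_0_compat; [apply exp_pos|auto].
- intros x Hx. destruct (Hder x Hx) as [d1 [d2 e]].
  assert (Dexp : forall y, is_derive (fun x => exp (a*x)) y (a * exp (a*y))).
  { intros y. auto_derive; auto. ring. }
  split; [|split].
  + eapply is_derive_val.
    * apply (is_derive_mult (K:=R_AbsRing) (fun x => exp (a*x)) phi x _ _ (Dexp x) d1). intros; apply Rmult_comm.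
    * simpl. unfold plus, mult; simpl. ring.
  + assert (d3 : is_derive (fun x => a * phi x + phi' x) x (a * phi' x + phi'' x)).
    { eapply is_derive_val.
      - apply (is_derive_plus (K:=R_AbsRing) (V:=R_NormedModule) (fun x => a * phi x) phi' x (a * phi' x) (phi'' x)); [|exact d2].
        apply (is_derive_scal phi x a _ d1).
      - unfold plus; simpl. ring. }
    eapply is_derive_val.
    * apply (is_derive_mult (K:=R_AbsRing) (fun x => exp (a*x)) _ x _ _ (Dexp x) d3). intros; apply Rmult_comm.
    * simpl. unfold plus, mult; simpl. ring.
  + assert (Hphi'' : phi'' x = (Rf x * phi x - c * phi' x) / D) by (rewrite <- e; field; lra).
    rewrite Hphi''. unfold a. field. lra.
- exists (a * a + BR / D). intros x Hx.
  eapply Rle_trans; [apply Rabs_triang|].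
  rewrite Rabs_right by nra. apply Rplus_le_compat_l.
  unfold Rdiv. rewrite Rabs_mult, (Rabs_right (/ D)) by (left; apply Rinv_0_lt_compat; lra).
  apply Rmult_le_compat_r; [left; apply Rinv_0_lt_compat; lra|]. apply HBR; exact Hx.
Qed.

Lemma Rpower_gt0 x y : 0 < Rpower x y.
Proof. unfold Rpower; apply exp_pos. Qed.

Lemma pow_inv n t : 0 < n -> 0 < t -> Rpower (Rpower t (1/n)) n = t.
Proof. intros Hn Ht. rewrite Rpower_mult. replace (1/n*n) with 1 by (field; lra). apply Rpower_1; exact Ht. Qed.

Lemma tr_le n a t : 0 < n -> 0 < a -> 0 < t -> a <= Rpower t (1/n) -> Rpower a n <= t.
Proof. intros Hn Ha Ht H. rewrite <- (pow_inv n t) by assumption. apply Rle_Rpower_l; lra. Qed.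
Lemma tr_lt n a t : 0 < n -> 0 < a -> 0 < t -> a < Rpower t (1/n) -> Rpower a n < t.
Proof. intros Hn Ha Ht H. rewrite <- (pow_inv n t) by assumption. apply Rlt_Rpower_l; lra. Qed.
Lemma tr_ge n a t : 0 < n -> 0 < a -> 0 < t -> Rpower t (1/n) <= a -> t <= Rpower a n.
Proof. intros Hn Ha Ht H. rewrite <- (pow_inv n t) at 1 by assumption. apply Rle_Rpower_l; [lra|]. split; [apply Rpower_gt0|lra]. Qed.
Lemma tr_gt n a t : 0 < n -> 0 < a -> 0 < t -> Rpower t (1/n) < a -> t < Rpower a n.
Proof. intros Hn Ha Ht H. rewrite <- (pow_inv n t) at 1 by assumption. apply Rlt_Rpower_l; [lra|]. split; [apply Rpower_gt0|lra]. Qed.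

Lemma arith_le r1 r2 mu q k p : 0 < r1 -> 0 < q -> q <= r1 -> p * r1 <= r2 -> k * r1 <= r2 -> r2 <= mu ->
  p * r1 - mu + q * (k - p) <= 0.
Proof. intros. nra. Qed.
Lemma arith_lt r1 r2 mu q k p : 0 < r1 -> 0 < q -> q < r1 -> p * r1 <= r2 -> k * r1 <= r2 -> r2 <= mu ->
  (p * r1 < r2 \/ k * r1 < r2) -> p * r1 - mu + q * (k - p) < 0.
Proof. intros. destruct H5; nra. Qed.
Lemma arith_ge r1 r2 mu q k p : 0 < r1 -> 0 < q -> q <= r1 -> r2 <= p * r1 -> r2 <= k * r1 -> mu <= r2 ->
  0 <= p * r1 - mu + q * (k - p).
Proof. intros. nra. Qed.
Lemma arith_gt r1 r2 mu q k p : 0 < r1 -> 0 < q -> q < r1 -> r2 <= p * r1 -> r2 <= k * r1 -> mu <= r2 ->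
  (r2 < p * r1 \/ r2 < k * r1) -> 0 < p * r1 - mu + q * (k - p).
Proof. intros. destruct H5; nra. Qed.
Theorem corollary1
  (L0 D1 D2 c : R) (f1 f2 : R -> R -> R) (K1 K2 r1 r2 n h1hat g2hat h2hat : R)
  (h1 g2 h2 U1 : R -> R) :
  0 < L0 -> 0 < D1 -> 0 < D2 ->
  (* assumptions on f1 *)
  (forall p : R * R, continuous (fun q : R * R => f1 (fst q) (snd q)) p) ->
  (forall u1, is_lim (fun u2 => f1 u1 u2) 0 (f1 u1 0)) ->
  kpp_term (fun u => f1 u 0) r1 K1 h1 ->
  (* assumptions on f2 *)
  0 < r2 ->
  (forall u1, is_lim (fun u2 => (f2 u1 u2 - u2 * (r2 - g2 u1)) / u2) 0 0) ->
  (forall u, continuous g2 u) -> g2 0 = 0 -> (forall u, 0 <= u -> 0 <= g2 u) ->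
  kpp_term (fun u => f2 0 u) r2 K2 h2 ->
  (* power-law forms *)
  0 < n -> 0 < h1hat -> 0 < g2hat -> 0 < h2hat ->
  (forall u, 0 < u -> h1 u = Rpower (h1hat * u) n) ->
  (forall u, 0 < u -> g2 u = Rpower (g2hat * u) n) ->
  (forall u, 0 < u -> h2 u = Rpower (h2hat * u) n) ->
  (* persistence of each species alone *)
  r1 > D1 * PI ^ 2 / L0 ^ 2 + c ^ 2 / (4 * D1) ->
  r2 > D2 * PI ^ 2 / L0 ^ 2 + c ^ 2 / (4 * D2) ->
  (* U1 the positive stationary state of species 1 *)
  stationary_state D1 c L0 (fun u => f1 u 0) K1 U1 ->
  let X := Rpower (r2 / r1) (1 / n) * h1hat in
  (* part 1 *)
  (c = 0 ->
     (r2 / r1 >= D2 / D1 -> X >= g2hat -> (r2 / r1 > D2 / D1 \/ X > g2hat) ->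
        can_invade D2 c L0 r2 g2 U1) /\
     (r2 / r1 <= D2 / D1 -> X <= g2hat -> (r2 / r1 < D2 / D1 \/ X < g2hat) ->
        cannot_invade D2 c L0 r2 g2 U1)) /\
  (* part 2 *)
  (D1 = D2 ->
     (r2 >= r1 -> X >= g2hat -> (r2 > r1 \/ X > g2hat) ->
        can_invade D2 c L0 r2 g2 U1) /\
     (r2 <= r1 -> X <= g2hat -> (r2 < r1 \/ X < g2hat) ->
        cannot_invade D2 c L0 r2 g2 U1)) /\
  (* part 3 *)
  (c <> 0 -> D1 <> D2 ->
     (r2 - c ^ 2 / (4 * D2) >= D2 / D1 * (r1 - c ^ 2 / (4 * D1)) ->
      g2hat / h1hat <= Rpower (D2 / D1) (1 / n)
                         * exp (- (L0 / 2 * Rabs (c * (1 / D2 - 1 / D1)))) ->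
        can_invade D2 c L0 r2 g2 U1) /\
     (r2 - c ^ 2 / (4 * D2) <= D2 / D1 * (r1 - c ^ 2 / (4 * D1)) ->
      g2hat / h1hat >= Rpower (D2 / D1) (1 / n)
                         * exp (L0 / 2 * Rabs (c * (1 / D2 - 1 / D1))) ->
        cannot_invade D2 c L0 r2 g2 U1)).
Proof.
intros HL HD1 HD2 _ _ Hkpp1 Hr2 _ _ _ _ _ Hn Hh1 Hg2 _ Hh1f Hg2f _ Hr1c Hr2c Hss X.
destruct Hkpp1 as [_ [_ [HK1 [_ [HFK [Hr1 [_ [HF _]]]]]]]].
assert (Hh1K : h1 K1 = r1).
{ assert (H := HF K1 ltac:(lra)). rewrite HFK in H.
  assert (K1 * (r1 - h1 K1) = 0) by lra.
  apply Rmult_integral in H0. destruct H0; lra. }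
destruct Hss as [HU0 [HUL [HUc [HUpos [U' [U'' HUd]]]]]].
set (q := fun x => Rpower (h1hat * U1 x) n).
assert (Hq : forall x, 0 < x < L0 -> 0 < q x <= r1 /\ h1 (U1 x) = q x).
{ intros x Hx. destruct (HUpos x Hx) as [Hp HK].
  assert (E1 : h1 (U1 x) = q x) by (apply Hh1f; exact Hp).
  split; [|exact E1]. split; [apply Rpower_gt0|].
  rewrite <- Hh1K, (Hh1f K1 HK1). apply Rle_Rpower_l; [lra|]. split; nra. }
assert (Hx0 : exists x0, 0 < x0 < L0 /\ q x0 < r1).
{ destruct (coc_eps U1 0 L0 HUc 0 ltac:(lra) K1 HK1) as [d [Hd Hd']].
  set (x0 := Rmin (d/2) (L0/2)).
  assert (Hx0 : 0 < x0 < L0 /\ x0 < d) by (unfold x0, Rmin; destruct Rle_dec; lra).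
  exists x0. split; [lra|].
  assert (H := Hd' x0 ltac:(lra) ltac:(rewrite Rminus_0_r, Rabs_right; lra)).
  rewrite HU0, Rminus_0_r in H. apply Rabs_def2 in H.
  rewrite <- Hh1K, (Hh1f K1 HK1). unfold q. apply Rlt_Rpower_l; [lra|].
  destruct (HUpos x0 ltac:(lra)). split; nra. }
destruct Hx0 as [x0 [Hx0 Hqx0]].
set (k := Rpower (g2hat / h1hat) n).
assert (Hk : 0 < k) by apply Rpower_gt0.
assert (Hg2U : forall x, 0 < x < L0 -> g2 (U1 x) = k * q x).
{ intros x Hx. destruct (HUpos x Hx) as [Hp _]. rewrite (Hg2f _ Hp). unfold k, q.
  rewrite Rpower_mult_distr; [|apply Rdiv_lt_0_compat; lra|nra]. f_equal. field. lra. }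
assert (GV := transform L0 D1 c U1 U' U'' (fun x => q x - r1) HL HD1 HU0 HUL HUc
   ltac:(intros x Hx; apply HUpos; exact Hx)
   ltac:(intros x Hx; destruct (HUd x Hx) as [d1 [d2 e]]; split; [exact d1|]; split; [exact d2|];
         destruct (Hq x Hx) as [_ Eq]; rewrite (HF (U1 x)) in e by (destruct (HUpos x Hx); lra);
         rewrite Eq in e; lra)
   ltac:(exists r1; intros x Hx; destruct (Hq x Hx) as [[? ?] _]; apply Rabs_le; lra)).
cbv zeta in GV.
set (rho := D2 / D1).
set (E := fun mu x => rho * (r1 - c^2/(4*D1)) - (mu - c^2/(4*D2)) + q x * (k - rho)).
assert (KEY : forall mu, principal_dirichlet_eig D2 c L0 (fun x => g2 (U1 x)) mu ->
   ((forall x, 0 < x < L0 -> E mu x <= 0) -> E mu x0 < 0 -> False) /\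
   ((forall x, 0 < x < L0 -> 0 <= E mu x) -> 0 < E mu x0 -> False)).
{ intros mu [phi [phi' [phi'' [H0 [HL0 [Hc [Hpos Hd]]]]]]].
  assert (Gv := transform L0 D2 c phi phi' phi'' (fun x => k * q x - mu) HL HD2 H0 HL0 Hc Hpos
   ltac:(intros x Hx; destruct (Hd x Hx) as [d1 [d2 e]]; split; [exact d1|]; split; [exact d2|];
         rewrite (Hg2U x Hx) in e; lra)
   ltac:(exists (k * r1 + Rabs mu); intros x Hx; destruct (Hq x Hx) as [[? ?] _];
         eapply Rle_trans; [apply Rabs_triang|]; rewrite Rabs_Ropp, Rabs_right by nra;
         apply Rplus_le_compat_r; nra)).
  cbv zeta in Gv.
  assert (Hdiff : forall x, (c / (2 * D2) * (c / (2 * D2)) + (k * q x - mu) / D2) -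
                   (c / (2 * D1) * (c / (2 * D1)) + (q x - r1) / D1) = E mu x / D2).
  { intros x. unfold E, rho. field. lra. }
  split.
  - intros Hall Hs. eapply (core L0); [exact HL|exact Gv|exact GV| |].
    + intros x Hx. cbv beta. assert (H := Hdiff x). assert (H' := Hall x Hx).
      assert (E mu x / D2 <= 0). { unfold Rdiv. assert (0 < / D2) by (apply Rinv_0_lt_compat; lra). nra. }
      lra.
    + exists x0. split; [exact Hx0|]. cbv beta. assert (H := Hdiff x0).
      assert (E mu x0 / D2 < 0). { unfold Rdiv. assert (0 < / D2) by (apply Rinv_0_lt_compat; lra). nra. }
      lra.
  - intros Hall Hs. eapply (core L0); [exact HL|exact GV|exact Gv| |].
    + intros x Hx. cbv beta. assert (H := Hdiff x). assert (H' := Hall x Hx).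
      assert (0 <= E mu x / D2). { unfold Rdiv. assert (0 < / D2) by (apply Rinv_0_lt_compat; lra). nra. }
      lra.
    + exists x0. split; [exact Hx0|]. cbv beta. assert (H := Hdiff x0).
      assert (0 < E mu x0 / D2). { unfold Rdiv. assert (0 < / D2) by (apply Rinv_0_lt_compat; lra). nra. }
      lra. }
assert (Hrho : 0 < rho) by (unfold rho; apply Rdiv_lt_0_compat; lra).
assert (Ht : 0 < r2 / r1) by (apply Rdiv_lt_0_compat; lra).
assert (Hgh : 0 < g2hat / h1hat) by (apply Rdiv_lt_0_compat; lra).
assert (XG : X >= g2hat -> k * r1 <= r2).
{ intros H. assert (k <= r2 / r1).
  { apply tr_le; try assumption. unfold X in H. apply Rmult_le_reg_r with h1hat; [lra|].
    unfold Rdiv; rewrite Rmult_assoc, Rinv_l by lra; lra. }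
  apply Rmult_le_reg_r with (/ r1); [apply Rinv_0_lt_compat; lra|].
  rewrite Rmult_assoc, Rinv_r by lra. lra. }
assert (XGs : X > g2hat -> k * r1 < r2).
{ intros H. assert (k < r2 / r1).
  { apply tr_lt; try assumption. unfold X in H. apply Rmult_lt_reg_r with h1hat; [lra|].
    unfold Rdiv; rewrite Rmult_assoc, Rinv_l by lra; lra. }
  apply Rmult_lt_reg_r with (/ r1); [apply Rinv_0_lt_compat; lra|].
  rewrite Rmult_assoc, Rinv_r by lra. lra. }
assert (XL : X <= g2hat -> r2 <= k * r1).
{ intros H. assert (r2 / r1 <= k).
  { apply tr_ge; try assumption. unfold X in H. apply Rmult_le_reg_r with h1hat; [lra|].
    unfold Rdiv; rewrite Rmult_assoc, Rinv_l by lra; lra. }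
  apply Rmult_le_reg_r with (/ r1); [apply Rinv_0_lt_compat; lra|].
  rewrite Rmult_assoc, Rinv_r by lra. lra. }
assert (XLs : X < g2hat -> r2 < k * r1).
{ intros H. assert (r2 / r1 < k).
  { apply tr_gt; try assumption. unfold X in H. apply Rmult_lt_reg_r with h1hat; [lra|].
    unfold Rdiv; rewrite Rmult_assoc, Rinv_l by lra; lra. }
  apply Rmult_lt_reg_r with (/ r1); [apply Rinv_0_lt_compat; lra|].
  rewrite Rmult_assoc, Rinv_r by lra. lra. }
assert (RG : r2 / r1 >= rho -> rho * r1 <= r2).
{ intros H. apply Rmult_le_reg_r with (/ r1); [apply Rinv_0_lt_compat; lra|].
  rewrite Rmult_assoc, Rinv_r by lra. unfold Rdiv in H. lra. }
assert (RGs : r2 / r1 > rho -> rho * r1 < r2).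
{ intros H. apply Rmult_lt_reg_r with (/ r1); [apply Rinv_0_lt_compat; lra|].
  rewrite Rmult_assoc, Rinv_r by lra. unfold Rdiv in H. lra. }
assert (RL : r2 / r1 <= rho -> r2 <= rho * r1).
{ intros H. apply Rmult_le_reg_r with (/ r1); [apply Rinv_0_lt_compat; lra|].
  rewrite Rmult_assoc, Rinv_r by lra. unfold Rdiv in H. lra. }
assert (RLs : r2 / r1 < rho -> r2 < rho * r1).
{ intros H. apply Rmult_lt_reg_r with (/ r1); [apply Rinv_0_lt_compat; lra|].
  rewrite Rmult_assoc, Rinv_r by lra. unfold Rdiv in H. lra. }
assert (G12 : (forall mu x, E mu x = rho * r1 - mu + q x * (k - rho)) ->
   (rho * r1 <= r2 -> k * r1 <= r2 -> (rho * r1 < r2 \/ k * r1 < r2) -> can_invade D2 c L0 r2 g2 U1) /\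
   (r2 <= rho * r1 -> r2 <= k * r1 -> (r2 < rho * r1 \/ r2 < k * r1) -> cannot_invade D2 c L0 r2 g2 U1)).
{ intros HE. split.
  - intros H1 H2 H3 mu Hmu. destruct (Rlt_or_le mu r2) as [?|Hm]; [assumption|exfalso].
    apply (proj1 (KEY mu Hmu)).
    + intros x Hx. rewrite HE. destruct (Hq x Hx) as [[? ?] _]. eapply arith_le; eauto.
    + rewrite HE. eapply arith_lt; eauto. apply Hq; exact Hx0.
  - intros H1 H2 H3 mu Hmu. destruct (Rlt_or_le r2 mu) as [?|Hm]; [assumption|exfalso].
    apply (proj2 (KEY mu Hmu)).
    + intros x Hx. rewrite HE. destruct (Hq x Hx) as [[? ?] _]. eapply arith_ge; eauto.
    + rewrite HE. eapply arith_gt; eauto. apply Hq; exact Hx0. }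
split; [|split].
- intros Hc0. destruct G12 as [G1 G2].
  { intros mu x. unfold E. rewrite Hc0. field. lra. }
  split.
  + intros H1 H2 H3. apply G1; auto. destruct H3; auto.
  + intros H1 H2 H3. apply G2; auto. destruct H3; auto.
- intros HDD. assert (Hrho1 : rho = 1) by (unfold rho; rewrite HDD; field; lra).
  destruct G12 as [G1 G2].
  { intros mu x. unfold E. rewrite Hrho1, HDD. field. lra. }
  rewrite Hrho1 in G1, G2. split.
  + intros H1 H2 H3. apply G1; [lra|auto|]. destruct H3; [left; lra|right; auto].
  + intros H1 H2 H3. apply G2; [lra|auto|]. destruct H3; [left; lra|right; auto].
- intros Hc0 HDD.
  set (T := L0 / 2 * Rabs (c * (1 / D2 - 1 / D1))).
  assert (HT : 0 < T).
  { unfold T. apply Rmult_lt_0_compat; [lra|]. apply Rabs_pos_lt.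
    intro H. apply Rmult_integral in H. destruct H as [H|H]; [lra|].
    apply HDD. assert (1 / D2 = 1 / D1) by lra.
    apply (f_equal Rinv) in H0. rewrite !Rinv_div, !Rdiv_1_r in H0. lra. }
  assert (Hp : 0 < Rpower rho (1 / n)) by apply Rpower_gt0.
  split.
  + intros H1 H2 mu Hmu. destruct (Rlt_or_le mu r2) as [?|Hm]; [assumption|exfalso].
    assert (Hkr : k < rho).
    { apply tr_lt; try assumption. eapply Rle_lt_trans; [exact H2|].
      assert (exp (- T) < 1) by (rewrite <- exp_0; apply exp_increasing; lra). nra. }
    apply (proj1 (KEY mu Hmu)).
    * intros x Hx. unfold E. destruct (Hq x Hx) as [[? ?] _]. unfold rho in *. nra.
    * unfold E. destruct (Hq x0 Hx0) as [[? ?] _]. unfold rho in *. nra.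
  + intros H1 H2 mu Hmu. destruct (Rlt_or_le r2 mu) as [?|Hm]; [assumption|exfalso].
    assert (Hkr : rho < k).
    { apply tr_gt; try assumption. eapply Rlt_le_trans; [|apply Rge_le; exact H2].
      assert (1 < exp T) by (rewrite <- exp_0; apply exp_increasing; lra). nra. }
    apply (proj2 (KEY mu Hmu)).
    * intros x Hx. unfold E. destruct (Hq x Hx) as [[? ?] _]. unfold rho in *. nra.
    * unfold E. destruct (Hq x0 Hx0) as [[? ?] _]. unfold rho in *. nra.
Qed.
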